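(* There is no pair $(\Lambda,\Lambda')$, where $\Lambda$ is a well-rounded lattice of rank $9$ in a $9$-dimensional Euclidean space and $\Lambda'$ is a sublattice generated by $9$ linearly independent minimal vectors of $\Lambda$, such that $\Lambda/\Lambda'\cong(\mathbb Z/3\mathbb Z)^3$.
   Context: Minimal vectors of a lattice are its nonzero vectors of smallest norm $x\cdot x$; a lattice is well-rounded if its minimal vectors span the ambient space. *)

(* Defs.v *)
From HB Require Import structures.
From mathcomp Require Import all_boot all_order all_algebra.
From mathcomp Require Import reals.
Set Implicit Arguments. Unset Strict Implicit. Unset Printing Implicit Defensive.
Import Order.TTheory GRing.Theory Num.Theory.
Local Open Scope ring_scope.

Definition in_lattice (R : realType) (m n : nat) (B : 'M[R]_(m, n)) (x : 'rV[R]_n) : Prop :=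
  exists z : 'rV[int]_m, x = map_mx (fun k : int => k%:~R) z *m B.

Definition dot (R : realType) (n : nat) (x y : 'rV[R]_n) : R := (x *m y^T) 0 0.

Definition minimal_vec (R : realType) (n : nat) (B : 'M[R]_n) (v : 'rV[R]_n) : Prop :=
  [/\ in_lattice B v, v != 0 &
      forall w, in_lattice B w -> w != 0 -> dot v v <= dot w w].

(* Well-rounded: the minimal vectors span the ambient space R^n, i.e. some
   finite family of minimal vectors (rows of M) spans R^n. *)
Definition well_rounded (R : realType) (n : nat) (B : 'M[R]_n) : Prop :=
  exists (k : nat) (M : 'M[R]_(k, n)), (forall i, minimal_vec B (row i M)) /\ row_full M.

(* Lambda / Lambda' is isomorphic to the abelian group G: there is an additive
   map from Lambda onto G whose kernel is exactly Lambda' (first iso theorem). *)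
Definition quot_iso (R : realType) (n : nat) (B V : 'M[R]_n) (G : zmodType) : Prop :=
  exists f : 'rV[R]_n -> G,
    [/\ forall x y, in_lattice B x -> in_lattice B y -> f (x + y) = f x + f y,
        forall g : G, exists2 x, in_lattice B x & f x = g &
        forall x, in_lattice B x -> (f x = 0 <-> in_lattice V x)].

(* Main.v *)
From HB Require Import structures.
From mathcomp Require Import all_boot all_order all_algebra.
From mathcomp Require Import reals zify ring lra.
Require Import Defs.
Set Implicit Arguments. Unset Strict Implicit. Unset Printing Implicit Defensive.
Import Order.TTheory GRing.Theory Num.Theory.
Local Open Scope ring_scope.

Definition dgn (k t : nat) : nat := ((t %/ 3 ^ k) %% 3)%N.
Definition dg (k t : nat) : int := (dgn k t)%:Z.
Definition cen (z : int) : int := let m := (z %% 3)%Z in if m == 2 then -1 else m.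
Definition vv (a0 a1 a2 : int) (t : nat) : int := cen (a0 * dg 0 t + a1 * dg 1 t + a2 * dg 2 t).
Definition cc a0 a1 a2 b0 b1 b2 : nat :=
  (\sum_(1 <= t < 27) ((vv a0 a1 a2 t == 0) && (vv b0 b1 b2 t == 0)))%N.
Definition SS a0 a1 a2 b0 b1 b2 : int := \sum_(0 <= t < 27) vv a0 a1 a2 t * vv b0 b1 b2 t.
Definition L3 : seq int := [:: -1; 0; 1].
Definition chk a0 a1 a2 b0 b1 b2 : bool :=
  ((a0, a1, a2) == (0,0,0)) || [&& cc a0 a1 a2 a0 a1 a2 == 8%N, SS a0 a1 a2 a0 a1 a2 == 18 &
    (cc a0 a1 a2 b0 b1 b2 == 8%N) || [&& cc a0 a1 a2 b0 b1 b2 == 2%N, (b0,b1,b2) != (0,0,0) & SS a0 a1 a2 b0 b1 b2 == 0]].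
Lemma fin_all : all (fun a0 => all (fun a1 => all (fun a2 => all (fun b0 => all (fun b1 => all (fun b2 =>
  chk a0 a1 a2 b0 b1 b2) L3) L3) L3) L3) L3) L3.
Proof. rewrite /chk /cc /SS unlock. vm_compute. reflexivity. Qed.

Lemma fin_spec a0 a1 a2 b0 b1 b2 : a0 \in L3 -> a1 \in L3 -> a2 \in L3 ->
  b0 \in L3 -> b1 \in L3 -> b2 \in L3 -> chk a0 a1 a2 b0 b1 b2.
Proof.
move=> h0 h1 h2 h3 h4 h5.
by move: fin_all => /allP/(_ _ h0)/allP/(_ _ h1)/allP/(_ _ h2)/allP/(_ _ h3)/allP/(_ _ h4)/allP/(_ _ h5).
Qed.

Lemma cen_in z : cen z \in L3.
Proof.
rewrite /cen; have : ((z %% 3 = 0) \/ (z %% 3 = 1) \/ (z %% 3 = 2))%Z by lia.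
by case=> [->|[->|->]].
Qed.

Lemma cen_decomp z : z = ((z - cen z) %/ 3)%Z * 3 + cen z.
Proof.
rewrite /cen; have : ((z %% 3 = 0) \/ (z %% 3 = 1) \/ (z %% 3 = 2))%Z by lia.
case=> [e|[e|e]]; rewrite e /=; lia.
Qed.

Lemma cen_spec r s k : r \in L3 -> r - s = k * 3 -> r = cen s.
Proof.
rewrite !inE => /or3P[] /eqP -> h; rewrite /cen.
- have -> : (s %% 3 = 2)%Z by lia. by [].
- have -> : (s %% 3 = 0)%Z by lia. by [].
- have -> : (s %% 3 = 1)%Z by lia. by [].
Qed.

Lemma digits t : (t < 27)%N -> t = (dgn 0 t + 3 * dgn 1 t + 9 * dgn 2 t)%N.
Proof. rewrite /dgn expn0 expn1 (_ : 3 ^ 2 = 9)%N //; lia. Qed.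

Lemma dgn_lt k t : (dgn k t < 3)%N.
Proof. by rewrite /dgn ltn_pmod. Qed.

Lemma Z3mul3 (v : 'rV['Z_3]_3) : v *+ 3 = 0.
Proof.
apply/rowP => k; rewrite !mulrS mulr0n !mxE addr0.
by case: (v 0 k) => [[|[|[|]]]] //= ?; apply/eqP.
Qed.

Lemma Z3nat n : (n < 3)%N -> (n%:R : 'Z_3) = 0 -> n = 0%N.
Proof. by case: n => [|[|[|]]] // _ /eqP. Qed.

Definition E (t : nat) : 'rV['Z_3]_3 := \row_k ((dgn k t)%:R).

Lemma E0 t : (t < 27)%N -> E t = 0 -> t = 0%N.
Proof.
move=> ht /rowP h.
have hk (k : 'I_3) : dgn k t = 0%N by apply: Z3nat (dgn_lt k t) _; have := h k; rewrite !mxE.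
rewrite (digits ht) (hk ord0) (hk (@Ordinal 3 1 isT)) (hk (@Ordinal 3 2 isT)).
by [].
Qed.

Lemma mxMnE (T : nmodType) m n (A : 'M[T]_(m,n)) k i j : (A *+ k) i j = A i j *+ k.
Proof. elim: k => [|k IH]; first by rewrite !mulr0n mxE.
by rewrite !mulrS mxE IH. Qed.

Lemma Elin t : E t = E 1 *+ dgn 0 t + E 3 *+ dgn 1 t + E 9 *+ dgn 2 t.
Proof.
apply/rowP => k; rewrite !mxE !mxMnE !mxE.
case: k => [[|[|[|?]]] hk] //=; rewrite /dgn /=; rewrite ?mul0rn ?add0r ?addr0 ?mulr1n //.
Qed.

Lemma ccO a0 a1 a2 b0 b1 b2 : cc a0 a1 a2 b0 b1 b2 =
  (\sum_(t < 27 | t != ord0) ((vv a0 a1 a2 t == 0) && (vv b0 b1 b2 t == 0)))%N.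
Proof.
apply/(@addnI ((vv a0 a1 a2 0 == 0) && (vv b0 b1 b2 0 == 0))).
rewrite /cc -big_ltn // big_mkord (bigD1 ord0) //.
Qed.

Lemma SSO a0 a1 a2 b0 b1 b2 : SS a0 a1 a2 b0 b1 b2 =
  \sum_(t < 27) vv a0 a1 a2 t * vv b0 b1 b2 t.
Proof. by rewrite /SS big_mkord. Qed.


Section Gen.
Variable R : realType.
Local Notation mz z := (map_mx (fun k : int => k%:~R) z).

Lemma mulmxMnl m n p (A : 'M[R]_(m,n)) (B : 'M[R]_(n,p)) k :
  (A *+ k) *m B = (A *m B) *+ k.
Proof. elim: k => [|k IH]; first by rewrite !mulr0n mul0mx.
by rewrite !mulrS mulmxDl IH. Qed.

Lemma mzMn m n (z : 'M[int]_(m,n)) k : mz (z *+ k) = (mz z : 'M[R]_(m,n)) *+ k.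
Proof. elim: k => [|k IH]; first by rewrite !mulr0n; apply/matrixP=> i j; rewrite !mxE.
by rewrite !mulrS map_mxD IH. Qed.

Lemma mzD m n (a b : 'M[int]_(m,n)) : mz (a + b) = (mz a : 'M[R]_(m,n)) + mz b.
Proof. by apply/matrixP=> i j; rewrite !mxE intrD. Qed.
Lemma mzB m n (a b : 'M[int]_(m,n)) : mz (a - b) = (mz a : 'M[R]_(m,n)) - mz b.
Proof. by apply/matrixP=> i j; rewrite !mxE intrB. Qed.

Lemma aux9 (m d : R) : m <= d -> 9 * m <= d *+ 3 *+ 3.
Proof. move=> h; rewrite -mulrnA -mulr_natr; lra. Qed.
Lemma aux9p (d : R) : 0 < d -> 0 < d *+ 3 *+ 3.
Proof. move=> h; rewrite -mulrnA -mulr_natr; lra. Qed.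

Lemma aux_low (m u v : R) : m *+ 9 *+ 26 <= v -> 0 <= u -> m *+ 234 <= u + v.
Proof. rewrite -mulrnA -[m *+ (9*26)]mulr_natr => h1 h2; lra. Qed.
Lemma aux_fin (m : R) : 0 < m -> m *+ 234 <= m *+ 162 -> False.
Proof. rewrite -[m *+ 234]mulr_natr -[m *+ 162]mulr_natr => h1 h2; lra. Qed.

Lemma inL0 m n (B : 'M[R]_(m,n)) : in_lattice B 0.
Proof. exists 0; apply/esym; rewrite (_ : mz 0 = 0) ?mul0mx //.
by apply/matrixP=> i j; rewrite !mxE. Qed.

Lemma inLD m n (B : 'M[R]_(m,n)) x y :
  in_lattice B x -> in_lattice B y -> in_lattice B (x + y).
Proof. by move=> [z ->] [w ->]; exists (z + w); rewrite map_mxD mulmxDl. Qed.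

Lemma inLN m n (B : 'M[R]_(m,n)) x : in_lattice B x -> in_lattice B (- x).
Proof. by move=> [z ->]; exists (- z); rewrite map_mxN mulNmx. Qed.

Lemma inLB m n (B : 'M[R]_(m,n)) x y :
  in_lattice B x -> in_lattice B y -> in_lattice B (x - y).
Proof. by move=> hx hy; apply: inLD hx (inLN hy). Qed.

Lemma inLMn m n (B : 'M[R]_(m,n)) x k : in_lattice B x -> in_lattice B (x *+ k).
Proof. move=> hx; elim: k => [|k IH]; first by rewrite mulr0n; apply: inL0.
by rewrite mulrS; apply: inLD. Qed.

Lemma inLsub n (B V : 'M[R]_n) x :
  (forall i, in_lattice B (row i V)) -> in_lattice V x -> in_lattice B x.
Proof.
move=> hV [z ->].
have [W hW] := fin_all_exists hV.
have hVW : V = mz (\matrix_(i, j) W i 0 j) *m B.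
  apply/row_matrixP => i; rewrite row_mul hW; congr (_ *m _).
  by apply/rowP => j; rewrite !mxE.
by exists (z *m \matrix_(i, j) W i 0 j); rewrite map_mxM -mulmxA -hVW.
Qed.

Definition dotE n (x y : 'rV[R]_n) : dot x y = \sum_k x 0 k * y 0 k.
Proof. by rewrite /dot !mxE; apply: eq_bigr => k _; rewrite mxE. Qed.

Lemma dotC n (x y : 'rV[R]_n) : dot x y = dot y x.
Proof. by rewrite !dotE; apply: eq_bigr => k _; rewrite mulrC. Qed.
Lemma dotDl n (x y z : 'rV[R]_n) : dot (x + y) z = dot x z + dot y z.
Proof. by rewrite !dotE -big_split; apply: eq_bigr => k _; rewrite !mxE mulrDl. Qed.
Lemma dotNl n (x z : 'rV[R]_n) : dot (- x) z = - dot x z.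
Proof. by rewrite !dotE -sumrN; apply: eq_bigr => k _; rewrite !mxE mulNr. Qed.
Lemma dotZl n a (x z : 'rV[R]_n) : dot (a *: x) z = a * dot x z.
Proof. by rewrite !dotE mulr_sumr; apply: eq_bigr => k _; rewrite !mxE mulrA. Qed.
Lemma dotDr n (x y z : 'rV[R]_n) : dot z (x + y) = dot z x + dot z y.
Proof. by rewrite dotC dotDl !(dotC z). Qed.
Lemma dotNr n (x z : 'rV[R]_n) : dot z (- x) = - dot z x.
Proof. by rewrite dotC dotNl dotC. Qed.
Lemma dotZr n a (x z : 'rV[R]_n) : dot z (a *: x) = a * dot z x.
Proof. by rewrite dotC dotZl dotC. Qed.
Lemma dot_sumr n p (F : 'I_p -> 'rV[R]_n) z : dot z (\sum_i F i) = \sum_i dot z (F i).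
Proof.
elim/big_ind2: _ => //; last by move=> *; rewrite dotDr; congr (_ + _).
by rewrite dotE big1 // => k _; rewrite mxE mulr0.
Qed.
Lemma dot_suml n p (F : 'I_p -> 'rV[R]_n) z : dot (\sum_i F i) z = \sum_i dot (F i) z.
Proof. by rewrite dotC dot_sumr; apply: eq_bigr => i _; rewrite dotC. Qed.
Lemma dotMnl n (x z : 'rV[R]_n) k : dot (x *+ k) z = dot x z *+ k.
Proof. by rewrite -scaler_nat dotZl mulr_natl. Qed.
Lemma dotMnr n (x z : 'rV[R]_n) k : dot z (x *+ k) = dot z x *+ k.
Proof. by rewrite dotC dotMnl dotC. Qed.
Lemma dot_ge0 n (x : 'rV[R]_n) : 0 <= dot x x.
Proof. by rewrite dotE sumr_ge0 // => k _; rewrite -expr2 sqr_ge0. Qed.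
Lemma dot_gt0 n (x : 'rV[R]_n) : x != 0 -> 0 < dot x x.
Proof.
move=> xn0; rewrite lt_def dot_ge0 andbT; apply: contra xn0 => /eqP.
rewrite dotE => /psumr_eq0P h; apply/eqP/rowP => k; rewrite mxE.
by apply/eqP; rewrite -sqrf_eq0 expr2 h // => j _; rewrite -expr2 sqr_ge0.
Qed.

Lemma weight9 (x : 'rV[R]_9) (e : 'I_9 -> 'rV[R]_9) (r : 'rV[int]_9) (m : R) :
  x = \sum_i (r 0 i)%:~R *: e i ->
  (forall i, r 0 i \in [:: -1; 0; 1]) ->
  (forall i, dot (e i) (e i) = m) ->
  (forall i, r 0 i != 0 ->
     9 * m <= dot (x - (3 * (r 0 i)%:~R) *: e i) (x - (3 * (r 0 i)%:~R) *: e i)) ->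
  0 < dot x x ->
  (6 <= \sum_(i < 9) ((r 0 i != 0)%R : nat))%N.
Proof.
move=> hx hr he hmin hN.
set N := dot x x.
have key (i : 'I_9) : 6 * ((r 0 i)%:~R * dot x (e i)) <= (r 0 i != 0)%:R * N.
  have := hr i; rewrite !inE => /or3P[] /eqP ri; rewrite ri /=.
  - have := hmin i; rewrite ri => /(_ isT).
    rewrite !dotDl !dotDr !dotNl !dotNr !dotZl !dotZr he (dotC (e i) x) -/N.
    move=> h; rewrite mul1r; lra.
  - by rewrite mul0r mulr0 mul0r.
  - have := hmin i; rewrite ri => /(_ isT).
    rewrite !dotDl !dotDr !dotNl !dotNr !dotZl !dotZr he (dotC (e i) x) -/N.
    move=> h; rewrite mul1r; lra.
have : 6 * N <= (\sum_(i < 9) ((r 0 i != 0)%R : nat))%:R * N.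
  rewrite {1}/N {2}hx dot_sumr mulr_sumr natr_sum mulr_suml.
  apply: ler_sum => i _; by rewrite dotZr.
by rewrite ler_pM2r // ler_nat.
Qed.
End Gen.

Local Notation mz z := (map_mx (fun k : int => k%:~R) z).

Theorem lemma7p6 (R : realType) :
  ~ exists (B V : 'M[R]_9),
      [/\ B \in unitmx, well_rounded B,
          (forall i, minimal_vec B (row i V)), row_free V &
          quot_iso B V ('rV['Z_3]_3)].
Proof.
case=> B [V] [_ _ minV Vfree [f [fD fsurj fker]]].
pose e i := row i V.
have eL i : in_lattice B (e i) by case: (minV i).
have en0 i : e i != 0 by case: (minV i).
have emin i w : in_lattice B w -> w != 0 -> dot (e i) (e i) <= dot w w.
  by case: (minV i) => _ _; apply.
pose m := dot (e ord0) (e ord0).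
have he i : dot (e i) (e i) = m.
  by apply/eqP; rewrite eq_le (emin i (e ord0) (eL ord0) (en0 ord0)) (emin ord0 (e i) (eL i) (en0 i)).
have hmin w : in_lattice B w -> w != 0 -> m <= dot w w := emin ord0 w.
have mpos : 0 < m := dot_gt0 (en0 ord0).
have subL x (h : in_lattice V x) : in_lattice B x by exact: inLsub eL h.
have f0 : f 0 = 0.
  have := fD 0 0 (inL0 B) (inL0 B); rewrite addr0 => h.
  by have := congr1 (fun g => g - f 0) h; rewrite subrr addrK => /esym.
have fN x : in_lattice B x -> f (- x) = - f x.
  move=> hx; have := fD x (- x) hx (inLN hx); rewrite subrr f0 => /esym /eqP.
  by rewrite addrC addr_eq0 => /eqP.
have fB x y : in_lattice B x -> in_lattice B y -> f (x - y) = f x - f y.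
  by move=> hx hy; rewrite fD ?fN //; apply: inLN.
have fMn x k : in_lattice B x -> f (x *+ k) = f x *+ k.
  move=> hx; elim: k => [|k IH]; first by rewrite !mulr0n f0.
  by rewrite !mulrS fD ?IH //; apply: inLMn.
have fV x : in_lattice V x -> f x = 0 by move=> h; apply/(fker x (subL x h)).
have Vf x : in_lattice B x -> f x = 0 -> in_lattice V x by move=> h /(fker x h).
have ein i : in_lattice V (e i).
  exists (delta_mx 0 i); rewrite /e rowE; congr (_ *m _); apply/rowP => j; rewrite !mxE.
  by case: (_ == _); case: (_ == _).
have einZ i (k : int) : in_lattice V (k%:~R *: e i).
  case: (ein i) => z ->; exists (k *: z); rewrite scalemxAl; congr (_ *m _).
  by apply/rowP => j; rewrite !mxE intrM.
have rep (t : 'I_27) : exists yr : 'rV[R]_9 * 'rV[int]_9,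
   [/\ in_lattice B yr.1, f yr.1 = E t, yr.1 *+ 3 = mz yr.2 *m V
     & forall i, yr.2 0 i \in L3].
  have [x xL fx] := fsurj (E t).
  have [z hz] : in_lattice V (x *+ 3).
    by apply: Vf; [exact: inLMn | rewrite fMn // fx Z3mul3].
  pose q := map_mx (fun a => ((a - cen a) %/ 3)%Z) z.
  have qV : in_lattice V (mz q *m V) by exists q.
  exists (x - mz q *m V, map_mx cen z); split => /=.
  - exact: inLB xL (subL _ qV).
  - by rewrite fB ?fx ?fV ?subr0 //; apply: subL.
  - rewrite mulrnBl hz -mulmxMnl -mzMn -mulmxBl -map_mxB; congr (_ *m _); congr (map_mx _ _).
    apply/matrixP => i j; rewrite !mxE.
    have := cen_decomp (z i j); move: (cen (z i j)) ((_ %/ 3)%Z) => c d ->; ring.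
  - by move=> i; rewrite mxE cen_in.
have [YR hYR] := fin_all_exists rep.
pose y t := (YR t).1. pose r t := (YR t).2.
have yL t : in_lattice B (y t) by case: (hYR t).
have fy t : f (y t) = E t by case: (hYR t).
have y3 t : y t *+ 3 = mz (r t) *m V by case: (hYR t).
have rL3 t i : r t 0 i \in L3 by case: (hYR t).
have mzinj (u w : 'rV[int]_9) : mz u *m V = mz w *m V -> u = w.
  move=> /(row_free_inj Vfree) /matrixP h; apply/matrixP => i j.
  by have := h i j; rewrite !mxE; exact: intr_inj.
have yn0 (t : 'I_27) : t != ord0 -> y t != 0.
  move=> tn0; apply/eqP => h; move: (fy t); rewrite h f0 => /esym /(E0 (ltn_ord t)) ht.
  by move: tn0; rewrite -val_eqE /= ht.
pose b0 := @Ordinal 27 1 isT. pose b1 := @Ordinal 27 3 isT. pose b2 := @Ordinal 27 9 isT.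
have lin t i : r t 0 i = vv (r b0 0 i) (r b1 0 i) (r b2 0 i) t.
  pose w := y t - (y b0 *+ dgn 0 t + y b1 *+ dgn 1 t + y b2 *+ dgn 2 t).
  have wL : in_lattice B w.
    rewrite /w; apply: inLB; [exact: yL| apply: inLD; [apply: inLD|]; apply: inLMn; exact: yL].
  have fw : f w = 0.
    rewrite /w fB ?fD ?fMn ?fy ?(Elin t) ?subrr //;
    by repeat first [apply: inLD | apply: inLMn | apply: yL].
  have [z hz] := Vf w wL fw.
  have h3 : mz (r t - (r b0 *+ dgn 0 t + r b1 *+ dgn 1 t + r b2 *+ dgn 2 t)) *m V
            = mz (z *+ 3) *m V.
    rewrite mzMn mulmxMnl -hz /w mulrnBl !mulrnDl -!mulrnA !(mulnC _ 3) !mulrnA !y3.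
    by rewrite -!mulmxMnl -!mulmxDl -mulmxBl -!mzMn -!mzD -mzB.
  have := congr1 (fun M : 'rV[int]_9 => M 0 i) (mzinj _ _ h3); rewrite !mxE !mxMnE => h.
  have h' : r t 0 i - (r b0 0 i *+ dgn 0 t + r b1 0 i *+ dgn 1 t + r b2 0 i *+ dgn 2 t)
     = z 0 i *+ 3 by exact: h.
  rewrite /vv; apply: (@cen_spec _ _ (z 0 i)) (rL3 t i) _; rewrite /dg; lia.
have hx t : y t *+ 3 = \sum_i (r t 0 i)%:~R *: e i.
  by rewrite y3 mulmx_sum_row; apply: eq_bigr => i _; rewrite mxE.
have wt (t : 'I_27) : t != ord0 -> (6 <= \sum_(i < 9) ((r t 0 i != 0)%R : nat))%N.
  move=> tn0; apply: (@weight9 R (y t *+ 3) e (r t) m).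
  - exact: hx.
  - exact: rL3 t.
  - exact: he.
  - move=> i ri0.
    pose c : R := (r t 0 i)%:~R.
    have wL : in_lattice B (y t - c *: e i) by apply: inLB (yL t) (subL _ (einZ i _)).
    have wn0 : y t - c *: e i != 0.
      apply/eqP => /eqP; rewrite subr_eq0 => /eqP hy.
      have := fV _ (einZ i (r t 0 i)); rewrite -/c -hy fy => /(E0 (ltn_ord t)) ht.
      by move: tn0; rewrite -val_eqE /= ht.
    have -> : y t *+ 3 - (3 * c) *: e i = (y t - c *: e i) *+ 3.
      by rewrite mulrnBl scalerMnl mulr_natl.
    rewrite dotMnl dotMnr.
    exact: aux9 (hmin _ wL wn0).
  - rewrite dotMnl dotMnr; have := dot_gt0 (yn0 t tn0).
    exact: aux9p.
have zc (t : 'I_27) : t != ord0 -> (\sum_(i < 9) ((r t 0 i == 0)%R : nat) <= 3)%N.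
  move=> tn0; have h9 : (\sum_(i<9) ((r t 0 i != 0)%R : nat) + \sum_(i<9) ((r t 0 i == 0)%R : nat) = 9)%N.
    rewrite -big_split /= (eq_bigr (fun _ => 1%N)) ?sum1_card ?card_ord // => i _.
    by case: (_ == _).
  have := wt t tn0. move: (\sum_(i<9) _)%N (\sum_(i<9) _)%N h9 => u v. lia.
pose a0 i := r b0 0 i. pose a1 i := r b1 0 i. pose a2 i := r b2 0 i.
have fs i j : chk (a0 i) (a1 i) (a2 i) (a0 j) (a1 j) (a2 j).
  by apply: fin_spec; apply: rL3.
pose nz i := (a0 i, a1 i, a2 i) != (0, 0, 0).
pose c i j := cc (a0 i) (a1 i) (a2 i) (a0 j) (a1 j) (a2 j).
have cnt p : nz p -> (\sum_(i < 9) c p i <= 24)%N.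
  move=> hp; have := fs p p; rewrite /chk (negbTE hp) /= => /and3P[/eqP cpp _ _].
  rewrite (_ : 24 = 3 * c p p)%N; last by rewrite /c cpp.
  rewrite /c; under eq_bigr do rewrite ccO.
  rewrite ccO exchange_big big_distrr /= leq_sum // => t tn0.
  rewrite (eq_bigr (fun i : 'I_9 => ((vv (a0 p) (a1 p) (a2 p) t == 0)%R * (r t 0 i == 0)%R)%N)); last first.
    by move=> i _; rewrite lin; case: (vv _ _ _ t == 0); case: (vv _ _ _ t == 0).
  rewrite -big_distrr /= mulnC; case: (_ == 0) => //=.
  by rewrite muln1 zc.
  by rewrite !muln0.
have key q0 j0 : nz q0 -> j0 != q0 -> nz j0 /\ SS (a0 q0) (a1 q0) (a2 q0) (a0 j0) (a1 j0) (a2 j0) = 0.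
  move=> hp hjp.
  have cases i : (c q0 i == 8%N) || [&& c q0 i == 2%N, nz i & SS (a0 q0) (a1 q0) (a2 q0) (a0 i) (a1 i) (a2 i) == 0].
    by have := fs q0 i; rewrite /chk (negbTE hp) /= => /and3P[_ _].
  have lb i : (2 + 6 * (c q0 i == 8%N) <= c q0 i)%N.
    by case/orP: (cases i) => [/eqP->|/and3P[/eqP-> _ _]].
  have cpp : c q0 q0 == 8%N.
    by have := fs q0 q0; rewrite /chk (negbTE hp) /= => /and3P[].
  case/orP: (cases j0) => [cj8|/and3P[_ ? /eqP ?]]; last by [].
  exfalso.
  have : (\sum_(i < 9) (2 + 6 * (c q0 i == 8%N)) <= 24)%N.
    by apply: leq_trans (cnt q0 hp); apply: leq_sum => i _; exact: lb i.
  rewrite big_split /= -big_distrr /= big_const_ord /=.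
  rewrite (bigD1 q0) //= (bigD1 j0) //= cpp cj8 /=.
  move: (\sum_(i < 9 | _) _)%N => u; lia.
have [p hp] : exists p, nz p.
  case: (pickP nz) => [p hp|hn]; first by exists p.
  exfalso; have := wt b0 isT; rewrite big1 // => i _.
  by have := hn i; rewrite /nz => /negbFE/eqP [h0 _ _]; move: h0; rewrite /a0 => ->.
have nzall i : nz i.
  by case: (eqVneq i p) => [->|hip] //; case: (key p i hp hip).
have S0 i j : i != j -> SS (a0 i) (a1 i) (a2 i) (a0 j) (a1 j) (a2 j) = 0.
  move=> hij; have hji : j != i by rewrite eq_sym.
  by case: (key i j (nzall i) hji).
have S18 i : SS (a0 i) (a1 i) (a2 i) (a0 i) (a1 i) (a2 i) = 18.
  by have := fs i i; rewrite /chk (negbTE (nzall i)) /= => /and3P[_ /eqP].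
have N t : dot (y t *+ 3) (y t *+ 3)
    = \sum_(i < 9) \sum_(j < 9) (r t 0 i)%:~R * (r t 0 j)%:~R * dot (e i) (e j).
  rewrite hx dot_suml; apply: eq_bigr => i _; rewrite dotZl dot_sumr mulr_sumr.
  by apply: eq_bigr => j _; rewrite dotZr mulrA.
have tot : \sum_(t < 27) dot (y t *+ 3) (y t *+ 3) = m *+ 162.
  under eq_bigr do rewrite N.
  rewrite exchange_big /=; under eq_bigr do rewrite exchange_big /=.
  have inner i j : \sum_(t < 27) (r t 0 i)%:~R * (r t 0 j)%:~R * dot (e i) (e j)
      = (SS (a0 i) (a1 i) (a2 i) (a0 j) (a1 j) (a2 j))%:~R * dot (e i) (e j).
    rewrite -mulr_suml SSO rmorph_sum; congr (_ * _); apply: eq_bigr => t _.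
    by rewrite (lin t i) (lin t j) -intrM.
  under eq_bigr do under eq_bigr do rewrite inner.
  rewrite (eq_bigr (fun i => m *+ 18)).
    by rewrite sumr_const card_ord -mulrnA.
  move=> i _; rewrite (bigD1 i) //= big1 ?addr0.
    by rewrite S18 he mulr_natl.
  by move=> j hji; rewrite S0 ?mul0r // eq_sym.
have low : m *+ 234 <= \sum_(t < 27) dot (y t *+ 3) (y t *+ 3).
  rewrite (bigD1 ord0) //=.
  have h : \sum_(t < 27 | t != ord0) (m *+ 9) <= \sum_(t < 27 | t != ord0) dot (y t *+ 3) (y t *+ 3).
    apply: ler_sum => t tn0; rewrite dotMnl dotMnr -mulr_natl.
    exact: aux9 (hmin _ (yL t) (yn0 t tn0)).
  rewrite sumr_const cardC1 card_ord /= in h.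
  exact: aux_low h (dot_ge0 _).
apply: (aux_fin mpos); rewrite -tot; exact: low.
Qed.
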